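(* Let $\mathcal{H}$ be a complex Hilbert space and let $T\in\mathcal{B}(\mathcal{H})$ be a concave operator such that $\Delta_T$ has rank one. Then $T$ is a $\Delta_T$-regular completely hyperexpansive operator and its Cauchy dual $T'=T(T^*T)^{-1}$ is a subnormal contraction.
   Context: $\Delta_T=T^*T-I$. $T$ is concave if $T^{*2}T^2-2T^*T+I\le0$ (then $T$ is left invertible). $T$ is $\Delta_T$-regular if $\Delta_TT=\Delta_T^{1/2}T\Delta_T^{1/2}$; completely hyperexpansive if $\sum_{j=0}^n(-1)^j\binom{n}{j}T^{*j}T^j\le0$ for all $n\ge1$. Subnormal means being the restriction of a normal operator to an invariant subspace. *)

(* Defs.v *)
From mathcomp Require Import all_boot all_order all_algebra.
From mathcomp Require Import reals complex.
Set Implicit Arguments. Unset Strict Implicit. Unset Printing Implicit Defensive.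
Import Order.TTheory GRing.Theory Num.Theory.
Local Open Scope ring_scope.

Definition ipnorm (R : realType) (V : lmodType R[i]) (ip : V -> V -> R[i]) (x : V) : R :=
  Num.sqrt (complex.Re (ip x x)).

Record hilbertSpace (R : realType) := HilbertSpace {
  hcarrier :> lmodType R[i];
  hip : hcarrier -> hcarrier -> R[i];
  hip_linl : forall (a : R[i]) (x y z : hcarrier), hip (a *: x + y) z = a * hip x z + hip y z;
  hip_sym : forall x y : hcarrier, hip y x = (hip x y)^*;
  hip_ge0 : forall x : hcarrier, 0 <= hip x x;
  hip_eq0 : forall x : hcarrier, hip x x = 0 -> x = 0;
  hcomplete : forall u : nat -> hcarrier,
    (forall e : R, 0 < e -> exists N : nat, forall m n : nat, (N <= m)%N -> (N <= n)%N ->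
        ipnorm hip (u m - u n) < e) ->
    exists l : hcarrier, forall e : R, 0 < e -> exists N : nat, forall n : nat, (N <= n)%N ->
        ipnorm hip (u n - l) < e
}.

Section Ops.
Variable R : realType.

Definition hnorm (H : hilbertSpace R) (x : H) : R := ipnorm (@hip R H) x.

Definition linear_op (H K : hilbertSpace R) (T : H -> K) : Prop :=
  forall (a : R[i]) (x y : H), T (a *: x + y) = a *: T x + T y.

Definition bounded_op (H K : hilbertSpace R) (T : H -> K) : Prop :=
  exists M : R, forall x : H, hnorm (T x) <= M * hnorm x.

Definition bop (H K : hilbertSpace R) (T : H -> K) : Prop := linear_op T /\ bounded_op T.

Definition is_adjoint (H : hilbertSpace R) (T Ts : H -> H) : Prop :=
  forall x y : H, hip (T x) y = hip x (Ts y).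

(* A <= 0 and A >= 0 in the operator order (complex order on R[i]: real and <= 0) *)
Definition op_le0 (H : hilbertSpace R) (A : H -> H) : Prop := forall x : H, hip (A x) x <= 0.
Definition op_ge0 (H : hilbertSpace R) (A : H -> H) : Prop := forall x : H, 0 <= hip (A x) x.

Definition DeltaT (H : hilbertSpace R) (T Ts : H -> H) : H -> H := fun x => Ts (T x) - x.

Definition concave (H : hilbertSpace R) (T Ts : H -> H) : Prop :=
  op_le0 (fun x => Ts (Ts (T (T x))) - 2 *: Ts (T x) + x).

Definition rank_one (H : hilbertSpace R) (A : H -> H) : Prop :=
  exists e : H, e <> 0 /\ forall y : H, (exists x, A x = y) <-> (exists c : R[i], y = c *: e).

Definition completely_hyperexpansive (H : hilbertSpace R) (T Ts : H -> H) : Prop :=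
  forall n : nat, (1 <= n)%N ->
    op_le0 (fun x => \sum_(j < n.+1) (((-1) ^+ j * ('C(n, j))%:R) *: iter j Ts (iter j T x))).

(* Delta_T-regular: Delta_T has a positive square root Delta_T^{1/2}, and
   Delta_T T = Delta_T^{1/2} T Delta_T^{1/2} (for the positive square root,
   which is unique). *)
Definition DeltaT_regular (H : hilbertSpace R) (T Ts : H -> H) : Prop :=
  (exists S : H -> H, bop S /\ op_ge0 S /\ forall x, S (S x) = DeltaT T Ts x) /\
  (forall S : H -> H, bop S -> op_ge0 S -> (forall x, S (S x) = DeltaT T Ts x) ->
     forall x, DeltaT T Ts (T x) = S (T (S x))).

Definition contraction (H : hilbertSpace R) (T : H -> H) : Prop :=
  forall x : H, hnorm (T x) <= hnorm x.

(* subnormal: T is the restriction of a normal operator N on a Hilbert space K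
   to an invariant subspace, i.e. there is an isometric embedding J : H -> K
   with N J = J T. *)
Definition subnormal (H : hilbertSpace R) (T : H -> H) : Prop :=
  exists (K : hilbertSpace R) (J : H -> K) (N Ns : K -> K),
    linear_op J /\ (forall x y : H, hip (J x) (J y) = hip x y) /\
    bop N /\ is_adjoint N Ns /\ (forall z : K, N (Ns z) = Ns (N z)) /\
    (forall x : H, N (J x) = J (T x)).

End Ops.

(* Main.v *)
Require Import Defs.
From mathcomp Require Import all_boot all_order all_algebra.
From mathcomp Require Import reals complex.
From mathcomp Require Import ring lra.
Import Order.TTheory GRing.Theory Num.Theory.
Local Open Scope ring_scope.


Section Basics.
Variable R : realType.
Variable H : hilbertSpace R.
Local Notation ip := (@hip R H).

Lemma ip0l (z : H) : ip 0 z = 0.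
Proof.
have := hip_linl 1 (0 : H) 0 z. rewrite scale1r addr0 mul1r.
move=> h; have := congr1 (fun t => t - ip 0 z) h; rewrite addrK subrr => <-.
by [].
Qed.

Lemma ipDl (x y z : H) : ip (x + y) z = ip x z + ip y z.
Proof. by rewrite -{1}[x]scale1r hip_linl mul1r. Qed.

Lemma ipZl (a : R[i]) (x z : H) : ip (a *: x) z = a * ip x z.
Proof. by rewrite -[a *: x]addr0 hip_linl ip0l addr0. Qed.

Lemma ipNl (x z : H) : ip (- x) z = - ip x z.
Proof. by rewrite -scaleN1r ipZl mulN1r. Qed.

Lemma ipBl (x y z : H) : ip (x - y) z = ip x z - ip y z.
Proof. by rewrite ipDl ipNl. Qed.

Lemma ip0r (z : H) : ip z 0 = 0.
Proof. by rewrite hip_sym ip0l rmorph0. Qed.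

Lemma ipDr (x y z : H) : ip z (x + y) = ip z x + ip z y.
Proof. by rewrite hip_sym ipDl rmorphD /= -!hip_sym. Qed.

Lemma ipZr (a : R[i]) (x z : H) : ip z (a *: x) = a^* * ip z x.
Proof. by rewrite hip_sym ipZl rmorphM /= -hip_sym. Qed.

Lemma ipNr (x z : H) : ip z (- x) = - ip z x.
Proof. by rewrite hip_sym ipNl rmorphN /= -hip_sym. Qed.

Lemma ipBr (x y z : H) : ip z (x - y) = ip z x - ip z y.
Proof. by rewrite ipDr ipNr. Qed.

Lemma ipsuml (I : Type) (r : seq I) (P : pred I) (F : I -> H) (z : H) :
  ip (\sum_(i <- r | P i) F i) z = \sum_(i <- r | P i) ip (F i) z.
Proof.
elim/big_rec2: _ => [|i y1 y2 _ <-]; first exact: ip0l.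
by rewrite ipDl.
Qed.

Lemma ipxx_conj (x : H) : (ip x x)^* = ip x x.
Proof. by rewrite -hip_sym. Qed.

Lemma ip_extl (u v : H) : (forall z, ip z u = ip z v) -> u = v.
Proof.
move=> h; apply/eqP; rewrite -subr_eq0; apply/eqP; apply: hip_eq0.
by rewrite ipBr h subrr.
Qed.

Lemma ip_extr (u v : H) : (forall z, ip u z = ip v z) -> u = v.
Proof.
move=> h; apply/eqP; rewrite -subr_eq0; apply/eqP; apply: hip_eq0.
by rewrite ipBl h subrr.
Qed.

End Basics.

Section LinGen.
Variable R : realType.
Variables (H K : hilbertSpace R).

Lemma lin0 (f : H -> K) : linear_op f -> f 0 = 0.
Proof.
move=> hf; have := hf 1 0 0; rewrite !scale1r !addr0 => h.
by have := congr1 (fun t => t - f 0) h; rewrite addrK subrr => <-.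
Qed.
Lemma linD (f : H -> K) : linear_op f -> forall x y, f (x + y) = f x + f y.
Proof. by move=> hf x y; have := hf 1 x y; rewrite !scale1r. Qed.
Lemma linZ (f : H -> K) : linear_op f -> forall a x, f (a *: x) = a *: f x.
Proof. by move=> hf a x; have := hf a x 0; rewrite !addr0 lin0 // addr0. Qed.
Lemma linN (f : H -> K) : linear_op f -> forall x, f (- x) = - f x.
Proof. by move=> hf x; rewrite -scaleN1r linZ // scaleN1r. Qed.
Lemma linB (f : H -> K) : linear_op f -> forall x y, f (x - y) = f x - f y.
Proof. by move=> hf x y; rewrite linD // linN. Qed.

Lemma adj_linl (f : H -> K) (g : K -> H) :
  (forall x z, hip (f x) z = hip x (g z)) -> linear_op f.
Proof.
move=> h a x y; apply: ip_extr => z.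
by rewrite h hip_linl ipDl ipZl !h.
Qed.

Lemma adj_linr (f : H -> K) (g : K -> H) :
  (forall x z, hip (f x) z = hip x (g z)) -> linear_op g.
Proof.
move=> h a x y; apply: ip_extl => z.
by rewrite ipDr ipZr -!h ipDr ipZr.
Qed.
End LinGen.
Arguments lin0 {R H K f}.
Arguments linD {R H K f}.
Arguments linZ {R H K f}.
Arguments linN {R H K f}.
Arguments linB {R H K f}.
Arguments adj_linl {R H K f g}.
Arguments adj_linr {R H K f g}.

Lemma by_rel {F : comPzRingType} {x y u v : F} (c : F) :
  u = v -> x - y = c * (u - v) -> x = y.
Proof. by move=> -> /eqP; rewrite subrr mulr0 subr_eq0 => /eqP. Qed.


Section Norms.
Variable R : realType.

Lemma ReD (a b : R[i]) : complex.Re (a + b) = complex.Re a + complex.Re b.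
Proof. by case: a; case: b. Qed.

Lemma ReMC (c : R) (z : R[i]) : complex.Re ((c%:C)%C * z) = c * complex.Re z.
Proof. by case: z => a b /=; rewrite mul0r subr0. Qed.

Lemma Re_le (a b : R[i]) : a <= b -> complex.Re a <= complex.Re b.
Proof. by rewrite lecE => /andP[]. Qed.

Lemma Re_ge0 (a : R[i]) : 0 <= a -> 0 <= complex.Re a.
Proof. exact: Re_le. Qed.

Lemma sqrtD_le (a b : R) : 0 <= a -> 0 <= b ->
  Num.sqrt (a + b) <= Num.sqrt a + Num.sqrt b.
Proof.
move=> ha hb.
have h1 : 0 <= Num.sqrt a + Num.sqrt b by rewrite addr_ge0 // sqrtr_ge0.
rewrite -[X in _ <= X]ger0_norm // -sqrtr_sqr ler_wsqrtr //.
rewrite sqrrD !sqr_sqrtr //.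
have : 0 <= Num.sqrt a * Num.sqrt b *+ 2 by rewrite mulrn_wge0 // mulr_ge0 // sqrtr_ge0.
lra.
Qed.

Variable H : hilbertSpace R.
Local Notation ip := (@hip R H).

Lemma hnorm_le (x y : H) : ip y y <= ip x x -> hnorm y <= hnorm x.
Proof. by move=> h; rewrite /hnorm /ipnorm ler_wsqrtr // Re_le. Qed.

Lemma hnorm_leM (x y : H) (c : R) : 0 <= c -> ip y y <= (c%:C)%C * ip x x ->
  hnorm y <= Num.sqrt c * hnorm x.
Proof.
move=> hc h; rewrite /hnorm /ipnorm -sqrtrM // ler_wsqrtr //.
by rewrite -ReMC Re_le.
Qed.

End Norms.

Section Prod.
Variable R : realType.
Variables (H1 H2 : hilbertSpace R).
Definition PT : lmodType R[i] := (hcarrier H1 * hcarrier H2)%type.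
Definition pip (x y : PT) : R[i] := hip x.1 y.1 + hip x.2 y.2.

Lemma pip_linl (a : R[i]) (x y z : PT) : pip (a *: x + y) z = a * pip x z + pip y z.
Proof. rewrite /pip /= !hip_linl; ring. Qed.

Lemma pip_sym (x y : PT) : pip y x = (pip x y)^*.
Proof. by rewrite /pip rmorphD /= -!hip_sym. Qed.

Lemma pip_ge0 (x : PT) : 0 <= pip x x.
Proof. by rewrite /pip addr_ge0 // hip_ge0. Qed.

Lemma pip_eq0 (x : PT) : pip x x = 0 -> x = 0.
Proof.
move=> /eqP; rewrite /pip paddr_eq0 ?hip_ge0 // => /andP[/eqP h1 /eqP h2].
by case: x h1 h2 => a b /= /hip_eq0 -> /hip_eq0 ->.
Qed.

Lemma pnorm_ge0 {H : hilbertSpace R} (x : H) : 0 <= complex.Re (hip x x).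
Proof. exact/Re_ge0/hip_ge0. Qed.

Lemma pnorm1 (x : PT) : ipnorm (@hip R H1) x.1 <= ipnorm pip x.
Proof.
rewrite /ipnorm /pip ReD ler_wsqrtr //.
by have := pnorm_ge0 x.2; lra.
Qed.

Lemma pnorm2 (x : PT) : ipnorm (@hip R H2) x.2 <= ipnorm pip x.
Proof.
rewrite /ipnorm /pip ReD ler_wsqrtr //.
by have := pnorm_ge0 x.1; lra.
Qed.

Lemma pnormD (x : PT) : ipnorm pip x <= ipnorm (@hip R H1) x.1 + ipnorm (@hip R H2) x.2.
Proof. by rewrite /ipnorm /pip ReD sqrtD_le // pnorm_ge0. Qed.

Lemma pcomplete : forall u : nat -> PT,
    (forall e : R, 0 < e -> exists N : nat, forall m n : nat, (N <= m)%N -> (N <= n)%N ->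
        ipnorm pip (u m - u n) < e) ->
    exists l : PT, forall e : R, 0 < e -> exists N : nat, forall n : nat, (N <= n)%N ->
        ipnorm pip (u n - l) < e.
Proof.
move=> u hu.
have c1 : forall e : R, 0 < e -> exists N : nat, forall m n : nat, (N <= m)%N -> (N <= n)%N ->
    ipnorm (@hip R H1) ((u m).1 - (u n).1) < e.
  move=> e he; have [N hN] := hu e he; exists N => m n hm hn.
  exact: le_lt_trans (pnorm1 (u m - u n)) (hN m n hm hn).
have c2 : forall e : R, 0 < e -> exists N : nat, forall m n : nat, (N <= m)%N -> (N <= n)%N ->
    ipnorm (@hip R H2) ((u m).2 - (u n).2) < e.
  move=> e he; have [N hN] := hu e he; exists N => m n hm hn.
  exact: le_lt_trans (pnorm2 (u m - u n)) (hN m n hm hn).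
have [l1 hl1] := hcomplete c1.
have [l2 hl2] := hcomplete c2.
exists (l1, l2) => e he.
have he2 : 0 < e / 2 by rewrite divr_gt0.
have [N1 hN1] := hl1 _ he2; have [N2 hN2] := hl2 _ he2.
exists (maxn N1 N2) => n hn.
apply: le_lt_trans (pnormD _) _.
have h1 := hN1 n (leq_trans (leq_maxl _ _) hn).
have h2 := hN2 n (leq_trans (leq_maxr _ _) hn).
simpl in h1, h2 |- *. lra.
Qed.

Definition prodH : hilbertSpace R :=
  @HilbertSpace R PT pip pip_linl pip_sym pip_ge0 pip_eq0 pcomplete.

End Prod.
Arguments prodH {R}.


Lemma conjR (R : realType) (r : R) : ((r%:C)%C : R[i])^* = (r%:C)%C.
Proof. exact: conjc_real. Qed.

Ltac ips := rewrite ?(ipDl, ipDr, ipZl, ipZr, ipNl, ipNr, ipBl, ipBr, ip0l, ip0r).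
Ltac csimp := rewrite ?(rmorphD, rmorphN, rmorphB, rmorphM, rmorphXn, rmorph1, rmorph0) /=
   ?conjCK ?conjR -?hip_sym.

Section Dsum.
Variable F : comPzRingType.
Definition Dn (n : nat) (f : nat -> F) : F :=
  \sum_(j < n.+1) ((-1) ^+ j * ('C(n, j))%:R) * f j.

Lemma Dn_pascal n f : Dn n.+1 f = Dn n f - Dn n (fun j => f j.+1).
Proof.
rewrite /Dn big_ord_recl /= [in X in _ = X - _]big_ord_recl /=.
rewrite !bin0 !expr0 !mul1r.
have -> : \sum_(i < n.+1) ((-1) ^+ (bump 0 i) * ('C(n.+1, bump 0 i))%:R) * f (bump 0 i)
  = \sum_(i < n.+1) (- ((-1) ^+ i * ('C(n, i))%:R * f i.+1))
    + \sum_(i < n.+1) ((-1) ^+ i.+1 * ('C(n, i.+1))%:R) * f i.+1.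
  rewrite -big_split /=; apply: eq_bigr => i _.
  rewrite /bump /= add1n binS natrD exprS; ring.
rewrite sumrN [X in _ + (_ + X) = _]big_ord_recr /= bin_small //.
have -> : \sum_(i < n) ((-1) ^+ (bump 0 i) * ('C(n, bump 0 i))%:R) * f (bump 0 i)
   = \sum_(i < n) ((-1) ^+ i.+1 * ('C(n, i.+1))%:R) * f i.+1.
  by apply: eq_bigr => i _; rewrite /bump add1n.
ring.
Qed.

Lemma Dn_lin n (c : F) f g : Dn n (fun j => f j + c * g j) = Dn n f + c * Dn n g.
Proof.
rewrite /Dn mulr_sumr -big_split /=; apply: eq_bigr => i _; ring.
Qed.

Lemma Dn_geom n (s : F) : Dn n (fun j => s ^+ j) = (1 - s) ^+ n.
Proof.
elim: n => [|n IH]; first by rewrite /Dn big_ord1 /= expr0 bin0 !mul1r.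
rewrite Dn_pascal.
have -> : Dn n (fun j => s ^+ j.+1) = s * Dn n (fun j => s ^+ j).
  by rewrite /Dn mulr_sumr; apply: eq_bigr => i _; rewrite exprS; ring.
by rewrite IH exprS; ring.
Qed.

Lemma Dn_rec n (K s : F) f : (forall j, f j.+1 = f j + K * s ^+ j) ->
  Dn n.+1 f = - (K * (1 - s) ^+ n).
Proof.
move=> hf; rewrite Dn_pascal.
have -> : Dn n (fun j => f j.+1) = Dn n (fun j => f j + K * s ^+ j).
  by rewrite /Dn; apply: eq_bigr => i _; rewrite hf.
by rewrite Dn_lin Dn_geom; ring.
Qed.
End Dsum.
Arguments Dn {F}.


Section Unitary.
Variable R : realType.
Variable H : hilbertSpace R.
Local Notation ip := (@hip R H).
Variables (C Cs : H -> H) (e : H) (d a : R[i]).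
Hypothesis he : ip e e = 1.
Hypothesis adjC : forall x y, ip (C x) y = ip x (Cs y).
Hypothesis CsC : forall x, Cs (C x) = x - (d * ip x e) *: e.
Hypothesis dCe : d *: C e = 0.
Hypothesis dd : d * d = d.
Hypothesis dconj : d^* = d.
Hypothesis ha : a * a^* <= 1.

Lemma Clin : linear_op C. Proof. exact: adj_linl adjC. Qed.
Lemma Cslin : linear_op Cs. Proof. exact: adj_linr adjC. Qed.
Lemma adjC' x y : ip x (C y) = ip (Cs x) y.
Proof. by rewrite hip_sym adjC -hip_sym. Qed.
Lemma dCe2 c : (d * c) *: C e = 0.
Proof. by rewrite mulrC -scalerA dCe scaler0. Qed.

Lemma PP x : C (Cs (C (Cs x))) = C (Cs x).
Proof. by rewrite CsC (linB Clin) (linZ Clin) dCe2 subr0. Qed.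
Lemma PC x : C (Cs (C x)) = C x.
Proof. by rewrite CsC (linB Clin) (linZ Clin) dCe2 subr0. Qed.

Definition KH := prodH H (prodH H H).

Definition Nop (z : KH) : KH :=
  (a *: z.1, (C z.2.1 + (z.2.2 - C (Cs z.2.2)), (d * ip z.2.1 e) *: e - Cs z.2.2)).
Definition Nsop (z : KH) : KH :=
  (a^* *: z.1, (Cs z.2.1 + (d * ip z.2.2 e) *: e, (z.2.1 - C (Cs z.2.1)) - C z.2.2)).

Lemma ipK (z z' : KH) : hip z z' = ip z.1 z'.1 + (ip z.2.1 z'.2.1 + ip z.2.2 z'.2.2).
Proof. by []. Qed.

Lemma N_adj z z' : hip (Nop z) z' = hip z (Nsop z').
Proof.
case: z => u [v w]; case: z' => u' [v' w'].
rewrite !ipK /=; ips; rewrite !adjC !adjC'; csimp; rewrite dconj; ring.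
Qed.

Lemma pairK (x y : KH) : x.1 = y.1 -> x.2.1 = y.2.1 -> x.2.2 = y.2.2 -> x = y.
Proof. by case: x => u [v w]; case: y => u' [v' w'] /= -> -> ->. Qed.

Lemma NNs z : Nop (Nsop z) = ((a * a^*) *: z.1, (z.2.1, z.2.2)).
Proof.
have CD := linD Clin; have CB := linB Clin; have CZ := linZ Clin.
have SD := linD Cslin; have SB := linB Cslin; have SZ := linZ Cslin.
case: z => u [v w]; apply: pairK => /=.
- by rewrite scalerA mulrC.
  rewrite CD CZ dCe2 addr0 !SB !CB PP PC.
  by apply: ip_extr => z; ips; ring.
- rewrite SB SB CsC CsC.
  apply: ip_extr => z; ips; rewrite he.
  by apply: (by_rel (ip w e * ip e z) dd); ring.
Qed.

Lemma NsN z : Nsop (Nop z) = ((a * a^*) *: z.1, (z.2.1, z.2.2)).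
Proof.
have CD := linD Clin; have CB := linB Clin; have CZ := linZ Clin.
have SD := linD Cslin; have SB := linB Cslin; have SZ := linZ Cslin.
case: z => u [v w]; apply: pairK => /=.
- by rewrite scalerA mulrC.
- rewrite SD SB CsC CsC.
  apply: ip_extr => z; ips; rewrite he.
  by apply: (by_rel (ip v e * ip e z) dd); ring.
- rewrite !SD !(linN Cslin) !CD !(linN Clin) CZ dCe2 PC PP.
  by apply: ip_extr => z; ips; ring.
Qed.

Lemma N_normal z : Nop (Nsop z) = Nsop (Nop z).
Proof. by rewrite NNs NsN. Qed.

Lemma N_bop : bop Nop.
Proof.
split.
  exact: adj_linl N_adj.
exists 1 => z; rewrite -[1]sqrtr1; apply: hnorm_leM => //.
rewrite (_ : (1%:C)%C = 1) // mul1r N_adj NsN.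
case: z => u [v w]; rewrite !ipK /= ipZr.
rewrite lerD2r rmorphM /= conjCK -[X in _ <= X]mul1r ler_wpM2r ?hip_ge0 //.
by rewrite mulrC.
Qed.
End Unitary.
Arguments KH {R}.
Arguments Nop {R H}.
Arguments Nsop {R H}.


Lemma rf1 (R : realType) (k s : R) : 0 < k -> k < 1 -> 0 <= s -> s <= 1 ->
  s * (1 - k) ^+ 2 < 1 /\ k <= 1 - s * (1 - k) ^+ 2.
Proof.
move=> h1 h2 h3 h4.
have p1 : 0 <= (1 - s) * ((1 - k) * (1 - k)) by rewrite mulr_ge0 // ?subr_ge0 // mulr_ge0 // subr_ge0 ltW.
have p2 : 0 < k * (2 - k) by rewrite mulr_gt0 // subr_gt0; lra.
have p3 : 0 <= s * k by rewrite mulr_ge0 // ltW.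
have p4 : 0 <= (1 - k) * (1 - s + s * k).
  apply: mulr_ge0; lra.
split; rewrite expr2; lra.
Qed.

Section Struct.
Variable R : realType.
Variable H : hilbertSpace R.
Local Notation ip := (@hip R H).
Variables (T Ts : H -> H).
Hypothesis hTl : linear_op T.
Hypothesis hadj : is_adjoint T Ts.
Variable e : H.
Hypothesis he : ip e e = 1.
Variable kap : R.
Hypothesis hkap : 0 < kap.
Local Notation kC := ((kap%:C)%C : R[i]).
Hypothesis hTT : forall x, Ts (T x) = x + (kC * ip x e) *: e.
Variable lam : R[i].
Hypothesis hTse : Ts e = lam *: e.
Variable s : R.
Hypothesis hs : lam^* * lam = (s%:C)%C.
Hypothesis hs0 : 0 <= s.
Hypothesis hs1 : s <= 1.

Lemma adjTs (x y : H) : ip (Ts x) y = ip x (T y).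
Proof. by rewrite hip_sym -hadj -hip_sym. Qed.

Lemma Ts_lin : linear_op Ts.
Proof.
move=> a x y; apply: ip_extl => z.
by rewrite -hadj; ips; rewrite -!hadj.
Qed.

Lemma T0 : T 0 = 0.
Proof.
have := hTl 1 0 0; rewrite !scale1r !addr0 => h.
by have := congr1 (fun t => t - T 0) h; rewrite addrK subrr => <-.
Qed.
Lemma T_add x y : T (x + y) = T x + T y.
Proof. by have := hTl 1 x y; rewrite !scale1r. Qed.
Lemma T_scale a x : T (a *: x) = a *: T x.
Proof. by have := hTl a x 0; rewrite !addr0 T0 addr0. Qed.

Lemma hTe x : ip (T x) e = lam^* * ip x e.
Proof. by rewrite hadj hTse ipZr mulrC. Qed.

Lemma iter_adj j (y x : H) : ip (iter j Ts y) x = ip y (iter j T x).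
Proof.
elim: j x => [//|j IH] x.
by rewrite [iter j.+1 Ts y]iterS adjTs IH iterSr.
Qed.

Lemma iterTe j x : ip (iter j T x) e = lam^* ^+ j * ip x e.
Proof.
elim: j => [|j IH]; first by rewrite expr0 mul1r.
by rewrite iterS hTe IH exprS mulrA.
Qed.

Lemma ipTT (y z : H) : ip (T y) (T z) = ip y z + kC * ip y e * ip e z.
Proof.
rewrite hadj hTT; ips; csimp; ring.
Qed.

Lemma che : completely_hyperexpansive T Ts.
Proof.
move=> [//|n] _ x.
rewrite ipsuml.
set f := fun j => ip (iter j T x) (iter j T x).
have -> : \sum_(j < n.+2) ip (((-1) ^+ j * ('C(n.+1, j))%:R) *: iter j Ts (iter j T x)) x
   = Dn n.+1 f.
  by apply: eq_bigr => j _; rewrite ipZl iter_adj.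
rewrite (@Dn_rec _ n (kC * (ip x e * ip e x)) (s%:C)%C f).
  rewrite oppr_le0 mulr_ge0 //.
    rewrite mulr_ge0 //; first by rewrite ler0c ltW.
    rewrite [ip e x]hip_sym; exact: mul_conjC_ge0.
  rewrite exprn_ge0 //.
  have -> : (1 - (s%:C)%C : R[i]) = ((1 - s)%:C)%C by rewrite rmorphB rmorph1.
  by rewrite ler0c subr_ge0.
move=> j; rewrite /f iterS ipTT iterTe [ip e _]hip_sym iterTe.
csimp. rewrite -hs exprMn. set u := lam^* ^+ j. set v := lam ^+ j. ring.
Qed.

Lemma ge0_eq (F : numDomainType) (a b : F) : a = b -> 0 <= a -> 0 <= b.
Proof. by move=> ->. Qed.

Lemma kC_gt0 : 0 < kC.
Proof. by rewrite ltcR. Qed.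
Lemma kC_neq0 : kC != 0.
Proof. by rewrite gt_eqF // kC_gt0. Qed.

Lemma bessel (x : H) : ip x e * ip e x <= ip x x.
Proof.
have h := hip_ge0 (x - (ip x e) *: e).
move: h; ips; rewrite he -hip_sym => h; rewrite -subr_ge0.
by apply: (ge0_eq _ _ _ _ h); ring.
Qed.

Lemma ipxe_ge0 (x : H) : 0 <= ip x e * ip e x.
Proof. by rewrite [ip e x]hip_sym; exact: mul_conjC_ge0. Qed.

Lemma Delta_form x : DeltaT T Ts x = (kC * ip x e) *: e.
Proof. by rewrite /DeltaT hTT addrC addKr. Qed.

Lemma reg_exists : exists S : H -> H, bop S /\ op_ge0 S /\ forall x, S (S x) = DeltaT T Ts x.
Proof.
pose m : R[i] := ((Num.sqrt kap)%:C)%C.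
have hm : m * m = kC.
  by rewrite /m -rmorphM /= -expr2 sqr_sqrtr // ltW.
have hmc : m^* = m by rewrite conjR.
exists (fun x => (m * ip x e) *: e); split; [split|split].
- move=> a x y; apply: ip_extr => z; ips; ring.
- exists (Num.sqrt kap) => x; apply: hnorm_leM; first by rewrite ltW.
  ips; rewrite he mulr1.
  have -> : m * ip x e * (m * ip x e)^* = kC * (ip x e * ip e x).
    by rewrite rmorphM /= hmc -hip_sym -hm; ring.
  by rewrite ler_pM2l ?kC_gt0 // bessel.
- move=> x; ips; rewrite -mulrA mulr_ge0 // ?ipxe_ge0 //.
  by rewrite /m ler0c sqrtr_ge0.
- move=> x; rewrite Delta_form; apply: ip_extr => z; ips; rewrite he -hm; ring.
Qed.

Lemma reg_unique (S : H -> H) : bop S -> op_ge0 S -> (forall x, S (S x) = DeltaT T Ts x) ->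
  forall x, DeltaT T Ts (T x) = S (T (S x)).
Proof.
move=> [hSl _] hS0 hSS.
have SD := linD hSl; have SZ := linZ hSl; have SB := linB hSl; have S0 := lin0 hSl.
set nu := ip (S e) e.
have hSe : S e = nu *: e.
  have h1 : S (S (S e)) = kC *: S e.
    by rewrite [S (S e)]hSS Delta_form he mulr1 SZ.
  have h2 : S (S (S e)) = (kC * nu) *: e by rewrite hSS Delta_form.
  apply: (@scalerI _ _ kC); first exact: kC_neq0.
  by rewrite -h1 h2 scalerA.
have hSx : forall x, S x = (nu * ip x e) *: e.
  move=> x.
  have [x' [hxx' hx'e]] : exists x', x = x' + (ip x e) *: e /\ ip x' e = 0.
    exists (x - (ip x e) *: e); split; first by rewrite subrK.
    by ips; rewrite he mulr1 subrr.
  have [z hz'] : exists z, z = S x' by eexists.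
  have hSz : S z = 0 by rewrite hz' hSS Delta_form hx'e mulr0 scale0r.
  have hz : z = 0.
    apply: hip_eq0; case: (eqVneq (ip z z) 0) => // hzz; exfalso.
    pose t : R[i] := ((ip z x' + 1) / ip z z)^*.
    have := hS0 (x' - t *: z).
    rewrite SB SZ hSz scaler0 subr0 -hz'; ips; rewrite /t conjCK.
    rewrite divfK //.
    have -> : ip z x' - (ip z x' + 1) = -1 by ring.
    by rewrite ler0N1.
  rewrite {1}hxx' SD SZ -hz' hz hSe add0r scalerA.
  by rewrite mulrC.
have hnu : nu * nu = kC.
  have := hSS e; rewrite Delta_form he mulr1 hSe SZ hSe scalerA => h.
  by have := congr1 (fun v => ip v e) h; rewrite /= !ipZl he !mulr1.
move=> x; rewrite Delta_form [S x]hSx T_scale hSx ipZl !hTe he mulr1.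
congr (_ *: _); rewrite -hnu; ring.
Qed.

Lemma regular : DeltaT_regular T Ts.
Proof. by split; [exact: reg_exists | exact: reg_unique]. Qed.

Definition kk : R := locked (kap / (1 + kap)).
Local Notation kkC := ((kk%:C)%C : R[i]).
Lemma kk_gt0 : 0 < kk.
Proof. by rewrite /kk -!lock divr_gt0 // addr_gt0. Qed.
Lemma kk_lt1 : kk < 1.
Proof. by rewrite /kk -!lock ltr_pdivrMr ?addr_gt0 // mul1r ltrDr. Qed.
Lemma kk_rel : kkC * (1 + kC) = kC.
Proof.
have h : kk * (1 + kap) = kap by rewrite /kk -!lock mulfVK // gt_eqF // addr_gt0.
by rewrite -[in RHS]h [RHS]rmorphM /= [in RHS]rmorphD /= rmorph1.
Qed.

Definition Bop (x : H) : H := x - (kkC * ip x e) *: e.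

Lemma ipBopl x y : ip (Bop x) y = ip x y - kkC * ip x e * ip e y.
Proof. by rewrite /Bop; ips. Qed.
Lemma ipBopr x y : ip x (Bop y) = ip x y - kkC * ip x e * ip e y.
Proof. rewrite /Bop; ips; csimp; ring. Qed.

Lemma B_TsT x : Bop (Ts (T x)) = x.
Proof.
apply: ip_extr => z; rewrite ipBopl hTT; ips; rewrite he.
apply: (by_rel (- ip x e * ip e z) kk_rel); ring.
Qed.

Lemma TsT_B x : Ts (T (Bop x)) = x.
Proof.
apply: ip_extr => z; rewrite hTT ipDl ipBopl ipZl ipBopl he.
apply: (by_rel (- (ip x e * ip e z)) kk_rel); ring.
Qed.

Lemma B_bop : bop Bop.
Proof.
split.
  by move=> a x y; apply: ip_extr => z; rewrite !ipBopl; ips; ring.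
exists 1 => x; rewrite -[1]sqrtr1; apply: hnorm_leM => //.
rewrite (_ : (1%:C)%C = 1) // mul1r ipBopl !ipBopr he.
have hk2 : 0 <= 2 * kk - kk ^+ 2 by have := kk_gt0; have := kk_lt1; nra.
have -> : ip x x - kkC * ip x e * ip e x - kkC * ip x e * (ip e x - kkC * 1 * ip e x)
  = ip x x - ((2 * kk - kk ^+ 2)%:C)%C * (ip x e * ip e x).
  rewrite !(rmorphB, rmorphM, rmorphXn, rmorph_nat) /=; ring.
by rewrite gerBl mulr_ge0 ?ler0c // ipxe_ge0.
Qed.

Lemma TB_contr : contraction (fun x => T (Bop x)).
Proof.
move=> x; apply: hnorm_le.
rewrite hadj TsT_B ipBopl gerBl -mulrA mulr_ge0 ?ipxe_ge0 //.
by rewrite ler0c ltW // kk_gt0.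
Qed.

(* scalars for the normal extension *)
Definition sr : R := locked (s * (1 - kk) ^+ 2).
Definition bb : R := locked (kk / (1 - sr)).
Definition qq : R := locked (Num.sqrt (1 - bb)).
Definition pp : R := locked (qq^-1).
Definition dd : R := locked (1 - pp * qq).
Definition be : R := locked (Num.sqrt bb).
Definition aC : R[i] := locked (lam^* * ((1 - kk)%:C)%C).
Local Notation bC := ((bb%:C)%C : R[i]).
Local Notation qC := ((qq%:C)%C : R[i]).
Local Notation pC := ((pp%:C)%C : R[i]).
Local Notation dC := ((dd%:C)%C : R[i]).
Local Notation beC := ((be%:C)%C : R[i]).

Lemma sr_ge0 : 0 <= sr.
Proof. by rewrite /sr -!lock mulr_ge0 // sqr_ge0. Qed.
Lemma sr_lt1 : sr < 1.
Proof. rewrite /sr -lock; exact: (@rf1 R kk s kk_gt0 kk_lt1 hs0 hs1).1. Qed.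
Lemma bb_rel : bb * (1 - sr) = kk.
Proof. by rewrite /bb -!lock divfK // subr_eq0 eq_sym lt_eqF // sr_lt1. Qed.
Lemma bb_gt0 : 0 < bb.
Proof. by rewrite /bb -!lock divr_gt0 ?kk_gt0 // subr_gt0 sr_lt1. Qed.
Lemma bb_le1 : bb <= 1.
Proof.
rewrite /bb -!lock ler_pdivrMr ?subr_gt0 ?sr_lt1 // mul1r /sr -lock.
exact: (@rf1 R kk s kk_gt0 kk_lt1 hs0 hs1).2.
Qed.
Lemma qq2 : qq * qq = 1 - bb.
Proof. by rewrite /qq -!lock -expr2 sqr_sqrtr // subr_ge0 bb_le1. Qed.
Lemma be2 : be * be = bb.
Proof. by rewrite /be -!lock -expr2 sqr_sqrtr // ltW // bb_gt0. Qed.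
Lemma pqq : pp * qq * qq = qq.
Proof.
rewrite /pp -!lock; case: (eqVneq qq 0) => [->|hq]; first by rewrite !mulr0.
by rewrite mulVf // mul1r.
Qed.
Lemma dd2 : dd * dd = dd.
Proof.
rewrite /dd /pp -!lock; case: (eqVneq qq 0) => [->|hq]; first by rewrite invr0 !mul0r subr0 mulr1.
by rewrite mulVf // subrr mulr0.
Qed.
Lemma ddq : dd * qq = 0.
Proof. by rewrite /dd -!lock mulrBl mul1r pqq subrr. Qed.

Lemma aa : aC * aC^* = (sr%:C)%C.
Proof.
rewrite /aC /sr -!lock rmorphM /= conjCK conjR rmorphM /= -hs rmorphXn /= rmorphB /= rmorph1.
ring.
Qed.

Lemma qC2 : qC * qC = 1 - bC.
Proof. by rewrite -rmorphM /= qq2 rmorphB /= rmorph1. Qed.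
Lemma pqqC : pC * qC * qC = qC.
Proof. by rewrite -!rmorphM /= pqq. Qed.
Lemma dC_def : dC = 1 - pC * qC.
Proof. by rewrite /dd -!lock rmorphB /= rmorph1 rmorphM. Qed.
Lemma dC2 : dC * dC = dC.
Proof. by rewrite -rmorphM /= dd2. Qed.
Lemma dqC : dC * qC = 0.
Proof. by rewrite -rmorphM /= ddq rmorph0. Qed.
Lemma beC2 : beC * beC = bC.
Proof. by rewrite -rmorphM /= be2. Qed.
Lemma rel3C : bC * (aC * aC^*) + kkC = bC.
Proof.
rewrite aa -rmorphM /= -rmorphD /=; congr ((_%:C)%C).
by have := bb_rel; lra.
Qed.

Lemma aC_def : aC = lam^* * ((1 - kk)%:C)%C. Proof. by rewrite /aC -!lock. Qed.

Definition Tp (x : H) : H := T (Bop x).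
Definition Tps (x : H) : H := Bop (Ts x).
Definition Rq (x : H) : H := x - (((1 - qq)%:C)%C * ip x e) *: e.
Definition Rp (x : H) : H := x - (((1 - pp)%:C)%C * ip x e) *: e.
Definition Cop (x : H) : H := Rq (Tp (Rp x)).
Definition Csop (x : H) : H := Rp (Tps (Rq x)).

Lemma Rq_adj x y : ip (Rq x) y = ip x (Rq y).
Proof. rewrite /Rq; ips; csimp; ring. Qed.
Lemma Rp_adj x y : ip (Rp x) y = ip x (Rp y).
Proof. rewrite /Rp; ips; csimp; ring. Qed.
Lemma Tp_adj x y : ip (Tp x) y = ip x (Tps y).
Proof. by rewrite /Tp /Tps hadj ipBopl ipBopr. Qed.
Lemma C_adj x y : ip (Cop x) y = ip x (Csop y).
Proof. by rewrite /Cop /Csop Rq_adj Tp_adj Rp_adj. Qed.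

Lemma Rq_e x : ip (Rq x) e = qC * ip x e.
Proof. rewrite /Rq; ips; rewrite he rmorphB /= rmorph1; ring. Qed.
Lemma Rp_e x : ip (Rp x) e = pC * ip x e.
Proof. rewrite /Rp; ips; rewrite he rmorphB /= rmorph1; ring. Qed.
Lemma Tp_e x : ip (Tp x) e = aC * ip x e.
Proof. rewrite /Tp hTe ipBopl he aC_def rmorphB /= rmorph1; ring. Qed.
Lemma Tp_Tp x y : ip (Tp x) (Tp y) = ip x y - kkC * ip x e * ip e y.
Proof. by rewrite /Tp hadj TsT_B ipBopl. Qed.

Lemma Rq_Rq x y : ip (Rq x) (Rq y) = ip x y - bC * ip x e * ip e y.
Proof.
rewrite Rq_adj /Rq; ips; csimp; rewrite he ?rmorphB /= ?rmorph1.
apply: (by_rel (ip x e * ip e y) qC2); ring.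
Qed.

Lemma RqTp x y : ip (Rq (Tp x)) (Rq (Tp y)) = ip x y - bC * ip x e * ip e y.
Proof.
rewrite Rq_Rq Tp_Tp Tp_e [ip e (Tp y)]hip_sym Tp_e; csimp.
apply: (by_rel (- (ip x e * ip e y)) rel3C); ring.
Qed.

Lemma C_C x y : ip (Cop x) (Cop y) = ip x y - dC * ip x e * ip e y.
Proof.
rewrite /Cop RqTp Rp_e [ip e (Rp y)]hip_sym Rp_e; csimp.
rewrite Rp_adj /Rp; ips; csimp; rewrite he ?rmorphB /= ?rmorph1.
have hb : bC = 1 - qC * qC by rewrite qC2; ring.
rewrite hb dC_def.
apply: (by_rel (pC * (ip x e * ip e y)) pqqC); ring.
Qed.

Lemma CsC x : Csop (Cop x) = x - (dC * ip x e) *: e.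
Proof.
apply: ip_extr => z.
by rewrite hip_sym -C_adj -hip_sym C_C; ips.
Qed.

Lemma Rq_lin : linear_op Rq. Proof. exact: adj_linl Rq_adj. Qed.
Lemma Rp_lin : linear_op Rp. Proof. exact: adj_linl Rp_adj. Qed.
Lemma Tp_lin : linear_op Tp. Proof. exact: adj_linl Tp_adj. Qed.

Lemma dRqTe : dC *: Rq (Tp e) = 0.
Proof.
apply: hip_eq0; rewrite ipZl ipZr RqTp he conjR.
have -> : dC * (dC * (1 - bC * 1 * 1)) = (dd * (dd * (qq * qq)))%:C%C.
  by rewrite qq2 !rmorphM /= rmorphB /= rmorph1; ring.
by rewrite (mulrA dd qq qq) ddq mul0r mulr0 rmorph0.
Qed.

Lemma Rp_e' : Rp e = pC *: e.
Proof.
apply: ip_extr => z; rewrite /Rp; ips; rewrite he rmorphB /= rmorph1; ring.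
Qed.

Lemma dCe : dC *: Cop e = 0.
Proof.
rewrite /Cop Rp_e' (linZ Tp_lin) (linZ Rq_lin) scalerA mulrC -scalerA dRqTe.
by rewrite scaler0.
Qed.

Lemma CopRq x : Cop (Rq x) = Rq (Tp x).
Proof.
rewrite /Cop.
have -> : Rp (Rq x) = x - (dC * ip x e) *: e.
  apply: ip_extr => z; rewrite /Rp /Rq; ips; rewrite he dC_def ?rmorphB /= ?rmorph1; ring.
rewrite (linB Tp_lin) (linB Rq_lin) (linZ Tp_lin) (linZ Rq_lin).
by rewrite mulrC -scalerA dRqTe scaler0 subr0.
Qed.

Lemma ha_le1 : aC * aC^* <= 1.
Proof. by rewrite aa -(rmorph1 (real_complex R)) lecR ltW // sr_lt1. Qed.

Lemma TB_subnormal : subnormal (fun x => T (Bop x)).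
Proof.
pose K := KH H.
pose J := fun x : H => (((beC * ip x e) *: e, (Rq x, 0)) : K).
exists K, J, (Nop Cop Csop e dC aC), (Nsop Cop Csop e dC aC).
have hd : dC^* = dC by rewrite conjR.
split; [|split; [|split; [|split; [|split]]]].
- move=> c x y; apply: pairK => /=.
  + apply: ip_extr => z; ips; ring.
  + by rewrite Rq_lin.
  + by rewrite scaler0 addr0.
- move=> x y; rewrite ipK /= ip0l addr0 Rq_Rq; ips; rewrite he.
  rewrite rmorphM /= conjR -hip_sym.
  apply: (by_rel (ip x e * ip e y) beC2); ring.
- exact: (@N_bop _ _ _ _ _ _ _ he C_adj CsC dCe dC2 hd ha_le1).
- exact: (@N_adj _ _ _ _ _ _ _ C_adj hd).
- exact: (@N_normal _ _ _ _ _ _ _ he C_adj CsC dCe dC2).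
- move=> x; apply: pairK => /=.
  + rewrite scalerA; congr (_ *: _); rewrite -/(Tp x) Tp_e; ring.
  + rewrite -/(Tp x) CopRq (lin0 (adj_linr C_adj)) (lin0 (adj_linl C_adj)) subr0 addr0.
    by [].
  + by rewrite Rq_e mulrA dqC mul0r scale0r (lin0 (adj_linr C_adj)) subr0.
Qed.

End Struct.


Section Derive.
Variable R : realType.
Variable H : hilbertSpace R.
Local Notation ip := (@hip R H).
Variables (T Ts : H -> H).
Hypothesis hTl : linear_op T.
Hypothesis hadj : is_adjoint T Ts.
Hypothesis hconc : concave T Ts.
Hypothesis hrank : rank_one (DeltaT T Ts).

Lemma adjTs' (x y : H) : ip (Ts x) y = ip x (T y).
Proof. by rewrite hip_sym -hadj -hip_sym. Qed.

Lemma Ts_lin' : linear_op Ts.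
Proof. exact: adj_linr hadj. Qed.

Lemma real_of (z : R[i]) : z^* = z -> z = ((complex.Re z)%:C)%C.
Proof. by move=> h; rewrite RRe_real //; apply/CrealP. Qed.

Lemma derive_struct : exists (e : H) (kap : R) (lam : R[i]) (s : R),
  [/\ ip e e = 1, 0 < kap, (forall x, Ts (T x) = x + (((kap%:C)%C : R[i]) * ip x e) *: e),
      Ts e = lam *: e & [/\ lam^* * lam = (s%:C)%C, 0 <= s & s <= 1]].
Proof.
have TsD := linD Ts_lin'; have TsZ := linZ Ts_lin'; have TsB := linB Ts_lin'.
have TD := linD hTl; have TZ := linZ hTl; have TB := linB hTl.
have [e0 [he0 hran]] := hrank.
set n0 := ip e0 e0.
have n0_gt0 : 0 < n0.
  rewrite lt_def hip_ge0 andbT; apply/eqP => /hip_eq0; exact: he0.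
set r := sqrtC n0.
have r_gt0 : 0 < r by rewrite sqrtC_gt0.
have rc : (r^-1)^* = r^-1 by rewrite geC0_conj // invr_ge0 ltW.
have [e ee] : exists e : H, e = r^-1 *: e0 by eexists.
have he : ip e e = 1.
  rewrite ee ipZl ipZr rc -/n0 -[n0 in _ * (_ * n0)](sqrtCK n0) -/r.
  by rewrite mulrA -expr2 -exprMn mulVf ?gt_eqF // expr1n.
have e0e : e0 = r *: e by rewrite ee scalerA divff ?gt_eqF // scale1r.
have hDx : forall x, DeltaT T Ts x = ip (DeltaT T Ts x) e *: e.
  move=> x; have [/(_ (ex_intro _ x erefl)) [c hc] _] := hran (DeltaT T Ts x).
  by rewrite hc e0e scalerA ipZl he mulr1.
have Dadj : forall x y, ip (DeltaT T Ts x) y = ip x (DeltaT T Ts y).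
  by move=> x y; rewrite /DeltaT ipBl ipBr adjTs' hadj.
have [kap0 kdef] : exists k, k = ip (DeltaT T Ts e) e by eexists.
have kc : kap0^* = kap0.
  by rewrite kdef -hip_sym -Dadj.
have hTT : forall x, Ts (T x) = x + (kap0 * ip x e) *: e.
  move=> x; have := hDx x; rewrite Dadj [DeltaT T Ts e]hDx -kdef ipZr kc.
  by rewrite /DeltaT => h; rewrite -h addrC subrK.
have kap0_neq0 : kap0 != 0.
  have [_ /(_ (ex_intro _ r^-1 ee)) [x hx]] := hran e.
  apply/eqP => hk0.
  have := congr1 (fun v => ip v e) hx.
  rewrite /= /DeltaT hTT addrC addKr ipZl he hk0 !mul0r => /eqP.
  by rewrite eq_sym oner_eq0.
have hC : forall x, kap0 * (ip (T x) e * ip e (T x) - ip x e * ip e x) <= 0.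
  move=> x; have := hconc x.
  rewrite hTT TsD TsZ hTT.
  have -> : ip (x + (kap0 * ip x e) *: e + (kap0 * ip (T x) e) *: Ts e
              - 2 *: (x + (kap0 * ip x e) *: e) + x) x
          = kap0 * (ip (T x) e * ip e (T x) - ip x e * ip e x).
    ips; rewrite adjTs' [ip e (T x)]hip_sym; ring.
  by [].
have kap0r := real_of _ kc.
set k := complex.Re kap0 in kap0r.
have k_gt0 : 0 < k.
  case: (ltgtP k 0) => // hk; last by move: kap0_neq0; rewrite kap0r hk eqxx.
  exfalso.
  have h1 := hC e; rewrite he mul1r kap0r nmulr_rle0 ?ltcR // subr_ge0 in h1.
  have h2 := @bessel _ _ _ he (T e).
  have h3 : ip (T e) (T e) = 1 + kap0 by rewrite hadj hTT; ips; rewrite he mulr1 kc mulr1.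
  rewrite h3 in h2; have := le_trans h1 h2.
  by rewrite kap0r lerDl ler0c leNgt hk.
have [lam ldef] : exists l, l = ip (Ts e) e by eexists.
have hTse : Ts e = lam *: e.
  have [x xdef] : exists x, x = Ts e - lam *: e by eexists.
  have hxe : ip x e = 0 by rewrite xdef ipBl ipZl he mulr1 -ldef subrr.
  have h1 := hC x; rewrite hxe mul0r subr0 kap0r pmulr_rle0 ?ltcR // in h1.
  have h2 : ip (T x) e = 0.
    apply/eqP; rewrite -mul_conjC_eq0 -hip_sym eq_le h1 /=.
    by rewrite [ip e _]hip_sym mul_conjC_ge0.
  apply/eqP; rewrite -subr_eq0 -xdef; apply/eqP; apply: hip_eq0.
  by rewrite {2}xdef ipBr ipZr -hadj h2 hxe mulr0 subr0.
exists e, k, lam, (complex.Re (lam^* * lam)).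
have ls : lam^* * lam = ((complex.Re (lam^* * lam))%:C)%C.
  by apply: real_of; rewrite rmorphM /= conjCK mulrC.
split => //.
- by rewrite -kap0r.
split => //.
- by rewrite -ler0c -ls mulrC mul_conjC_ge0.
- rewrite -lecR -ls (_ : (1%:C)%C = 1) //.
  have h1 := hC e; rewrite he mul1r kap0r pmulr_rle0 ?ltcR // subr_le0 in h1.
  by move: h1; rewrite hadj hTse ipZr he mulr1 -adjTs' hTse ipZl he mulr1.
Qed.

End Derive.


Theorem corollary3p6 (R : realType) (H : hilbertSpace R) (T Ts : H -> H) :
  bop T -> is_adjoint T Ts -> concave T Ts -> rank_one (DeltaT T Ts) ->
  DeltaT_regular T Ts /\ completely_hyperexpansive T Ts /\
  exists B : H -> H, bop B /\ (forall x, B (Ts (T x)) = x) /\ (forall x, Ts (T (B x)) = x) /\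
    contraction (fun x => T (B x)) /\ subnormal (fun x => T (B x)).
Proof.
move=> [hTl hTb] hadj hconc hrank.
have [e [kap [lam [s [he hkap hTT hTse [hs hs0 hs1]]]]]] :=
  @derive_struct R H T Ts hTl hadj hconc hrank.
split; first by eapply regular; eassumption.
split; first by eapply che; eassumption.
exists (Bop R H e kap).
split; first by eapply B_bop; eassumption.
split; first by move=> x; eapply B_TsT; eassumption.
split; first by move=> x; eapply TsT_B; eassumption.
split; first by eapply TB_contr; eassumption.
by eapply TB_subnormal; eassumption.
Qed.
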